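(* There is a surjective morphism of operads $\mathrm{FMan}\twoheadrightarrow \mathrm{gr}_F\,\mathrm{PreLie}$ sending $-\circ-$ and $[-,-]$ to the cosets of the symmetrised pre-Lie product and of the pre-Lie bracket, respectively.
   Context: All operads are symmetric, reduced and connected, over a field $\mathbb{k}$ of characteristic zero. The operad $\mathrm{PreLie}$ is generated by one binary operation $a_1\cdot a_2$ with no symmetry, subject to $(a_1\cdot a_2)\cdot a_3 - a_1\cdot (a_2\cdot a_3) = (a_1\cdot a_3)\cdot a_2- a_1\cdot (a_3\cdot a_2)$. Put $a_1\circ a_2=a_1\cdot a_2+a_2\cdot a_1$ and $[a_1,a_2]=a_1\cdot a_2-a_2\cdot a_1$. The Lie filtration $F^\bullet\mathrm{PreLie}$ is the filtration by powers of the operadic ideal generated by $[-,-]$ (so $F^k\mathrm{PreLie}$ is spanned by tree composites of $\circ$ and $[-,-]$ with at least $k$ vertices labelled by $[-,-]$), and $\mathrm{gr}_F\mathrm{PreLie}$ is the associated graded operad. The operad $\mathrm{FMan}$ is generated by a symmetric binary operation $-\circ-$ and a skew-symmetric binary operation $[-,-]$ subject to associativity of $\circ$, the Jacobi identity for $[-,-]$, and the Hertling--Manin relation \begin{multline*} [a_1\circ a_2,a_3\circ a_4]= [a_1\circ a_2, a_3]\circ a_4+[a_1\circ a_2, a_4]\circ a_3+a_1\circ [a_2, a_3\circ a_4]+a_2\circ [a_1, a_3\circ a_4]-\\ (a_1\circ a_3)\circ[a_2,a_4]-(a_2\circ a_3)\circ[a_1,a_4]-(a_2\circ a_4)\circ[a_1,a_3]-(a_1\circ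 a_4)\circ[a_2,a_3] . \end{multline*} *)

(* Defs.v *)
(* Concrete encoding of binary-generated symmetric operads
   by multilinear tree monomials. *)
From HB Require Import structures.
From mathcomp Require Import all_boot all_order all_algebra all_fingroup.
Set Implicit Arguments. Unset Strict Implicit. Unset Printing Implicit Defensive.
Import GRing.Theory.
Local Open Scope ring_scope.

Inductive term (G : Type) : Type :=
| Var of nat
| Node of G & term G & term G.
Arguments Var {G}.

Section TermEq.
Variable G : eqType.
Fixpoint term_eqb (s t : term G) : bool :=
  match s, t with
  | Var i, Var j => i == j
  | Node g l r, Node g' l' r' => [&& g == g', term_eqb l l' & term_eqb r r']
  | _, _ => false
  end.
Lemma term_eqP : Equality.axiom term_eqb.
Proof.
elim=> [i|g l IHl r IHr] [j|g' l' r'] /=; try by constructor.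
- by apply: (iffP eqP) => [->|[]].
- case: (g =P g') => [<-|ne]; last by constructor; case.
  case: (IHl l') => [<-|ne]; last by constructor; case.
  by case: (IHr r') => [<-|ne]; constructor; [|case].
Qed.
HB.instance Definition _ := hasDecEq.Build (term G) term_eqP.
End TermEq.

Fixpoint vars G (t : term G) : seq nat :=
  match t with Var i => [:: i] | Node _ l r => vars l ++ vars r end.

Definition ml G n (t : term G) : bool := perm_eq (vars t) (iota 0 n).

Fixpoint tsubst G (s : nat -> term G) (t : term G) : term G :=
  match t with Var i => s i | Node g l r => Node g (tsubst s l) (tsubst s r) end.

Section LinComb.
Variables (k : fieldType) (G : eqType).
Definition lc := seq (k * term G).

Definition coef (c : lc) (t : term G) : k := \sum_(p <- c | p.2 == t) p.1.
Definition lc_eqv (c d : lc) : Prop := forall t, coef c t = coef d t.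

Definition lc_add (c d : lc) : lc := c ++ d.
Definition lc_scale (a : k) (c : lc) : lc := [seq (a * p.1, p.2) | p <- c].
Definition lc_sub (c d : lc) : lc := c ++ lc_scale (-1) d.
Definition lc_mono (t : term G) : lc := [:: (1, t)].

Definition lc_ml n (c : lc) : bool := all (fun p => ml n p.2) c.

Definition lc_subst (s : nat -> term G) (c : lc) : lc :=
  [seq (p.1, tsubst s p.2) | p <- c].

Definition lc_nodel (g : G) (c : lc) (t : term G) : lc :=
  [seq (p.1, Node g p.2 t) | p <- c].
Definition lc_noder (g : G) (t : term G) (c : lc) : lc :=
  [seq (p.1, Node g t p.2) | p <- c].
End LinComb.

Arguments lc_mono {k G}.

Definition lc_bind (k : fieldType) (G G' : eqType) (f : term G -> seq (k * term G')) (c : lc k G)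
  : seq (k * term G') := flatten [seq lc_scale p.1 (f p.2) | p <- c].

Definition lc_bilin (k : fieldType) (G G' : eqType) (f : term G -> term G -> seq (k * term G'))
  (c d : lc k G) : seq (k * term G') :=
  flatten [seq lc_scale (p.1 * q.1) (f p.2 q.2) | p <- c, q <- d].


(* Partial composition t o_i s, for t of arity m, s of arity n, i < m   *)
(* (0-based): x_j stays for j < i, x_i is replaced by s with variables  *)
(* shifted by i, and x_j becomes x_{j+n-1} for j > i.                   *)
Definition pcomp_t (G : Type) (i n : nat) (t s : term G) : term G :=
  tsubst (fun j => if (j < i)%N then Var j
                   else if j == i then tsubst (fun l => Var (l + i)%N) s
                   else Var (j + n).-1) t.

Definition pcomp (k : fieldType) (G : eqType) (i n : nat) (c d : lc k G) : lc k G :=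
  lc_bilin (fun t s => lc_mono (pcomp_t i n t s)) c d.

Definition act (k : fieldType) (G : eqType) (n : nat) (s : 'S_n) (c : lc k G)
  : lc k G :=
  lc_subst (fun j => Var (odflt j (omap (fun j' : 'I_n => val (s j')) (insub j)))) c.

(* The T-ideal (= in characteristic 0, on multilinear parts, the       *)
(* operadic ideal) generated by a set R of relations.                  *)
Inductive tideal (k : fieldType) (G : eqType) (R : lc k G -> Prop) : lc k G -> Prop :=
| ti_rel r (s : nat -> term G) : R r -> tideal R (lc_subst s r)
| ti_add c d : tideal R c -> tideal R d -> tideal R (lc_add c d)
| ti_scale a c : tideal R c -> tideal R (lc_scale a c)
| ti_eqv c d : lc_eqv c d -> tideal R c -> tideal R d
| ti_nil : tideal R [::]
| ti_nodel g c t : tideal R c -> tideal R (lc_nodel g c t)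
| ti_noder g t c : tideal R c -> tideal R (lc_noder g t c).

(* An operad "given by representatives": arity-n elements are the       *)
(* formal combinations of multilinear arity-n monomials over G, modulo  *)
(* a kernel K n; composition is substitution, S_n acts by relabelling.  *)
Definition opeq (k : fieldType) (G : eqType) (K : nat -> lc k G -> Prop)
  (n : nat) (c d : lc k G) : Prop := K n (lc_sub c d).

Record is_operad_morphism (k : fieldType) (G1 G2 : eqType)
  (K1 : nat -> lc k G1 -> Prop) (K2 : nat -> lc k G2 -> Prop)
  (phi : nat -> lc k G1 -> lc k G2) : Prop := {
  om_arity : forall n c, lc_ml n c -> lc_ml n (phi n c);
  om_welldef : forall n c d, lc_ml n c -> lc_ml n d ->
      opeq K1 n c d -> opeq K2 n (phi n c) (phi n d);
  om_linear : forall n (a : k) c d, lc_ml n c -> lc_ml n d ->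
      opeq K2 n (phi n (lc_add (lc_scale a c) d))
                (lc_add (lc_scale a (phi n c)) (phi n d));
  om_equivariant : forall n (s : 'S_n) c, lc_ml n c ->
      opeq K2 n (phi n (act s c)) (act s (phi n c));
  om_comp : forall m n i c d, (i < m)%N -> lc_ml m c -> lc_ml n d ->
      opeq K2 (m + n).-1 (phi (m + n).-1 (pcomp i n c d))
                         (pcomp i n (phi m c) (phi n d));
  om_unit : opeq K2 1 (phi 1%N (lc_mono (Var 0))) (lc_mono (Var 0))
}.

Definition surjective_morphism (k : fieldType) (G1 G2 : eqType)
  (K1 : nat -> lc k G1 -> Prop) (K2 : nat -> lc k G2 -> Prop)
  (phi : nat -> lc k G1 -> lc k G2) : Prop :=
  forall n d, lc_ml n d -> exists2 c, lc_ml n c & opeq K2 n (phi n c) d.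

Inductive fop := OCirc | OBr.
Definition fop_eqb (a b : fop) : bool :=
  match a, b with OCirc, OCirc | OBr, OBr => true | _, _ => false end.
Lemma fop_eqP : Equality.axiom fop_eqb.
Proof. by case; case; constructor. Qed.
HB.instance Definition _ := hasDecEq.Build fop fop_eqP.

(* the single pre-Lie product a . b is encoded by the alphabet unit *)

Section Concrete.
Variable k : fieldType.

Definition x (i : nat) {G} : term G := Var i.
Definition circ (a b : term fop) := Node OCirc a b.
Definition br (a b : term fop) := Node OBr a b.
Definition dot (a b : term unit) := Node tt a b.


Definition R_FMan (r : lc k fop) : Prop :=
  r = [:: (1, circ (x 0) (x 1)); (-1, circ (x 1) (x 0))] \/
  r = [:: (1, br (x 0) (x 1)); (1, br (x 1) (x 0))] \/
  r = [:: (1, circ (circ (x 0) (x 1)) (x 2)); (-1, circ (x 0) (circ (x 1) (x 2)))] \/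
  r = [:: (1, br (br (x 0) (x 1)) (x 2)); (1, br (br (x 1) (x 2)) (x 0));
          (1, br (br (x 2) (x 0)) (x 1))] \/
  (* Hertling--Manin (a_1,a_2,a_3,a_4 = x_0,x_1,x_2,x_3), as LHS - RHS *)
  r = [:: (1, br (circ (x 0) (x 1)) (circ (x 2) (x 3)));
          (-1, circ (br (circ (x 0) (x 1)) (x 2)) (x 3));
          (-1, circ (br (circ (x 0) (x 1)) (x 3)) (x 2));
          (-1, circ (x 0) (br (x 1) (circ (x 2) (x 3))));
          (-1, circ (x 1) (br (x 0) (circ (x 2) (x 3))));
          (1, circ (circ (x 0) (x 2)) (br (x 1) (x 3)));
          (1, circ (circ (x 1) (x 2)) (br (x 0) (x 3)));
          (1, circ (circ (x 1) (x 3)) (br (x 0) (x 2)));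
          (1, circ (circ (x 0) (x 3)) (br (x 1) (x 2)))].

Definition K_FMan (n : nat) (c : lc k fop) : Prop :=
  lc_ml n c /\ tideal R_FMan c.

Definition R_PreLie (r : lc k unit) : Prop :=
  r = [:: (1, dot (dot (x 0) (x 1)) (x 2)); (-1, dot (x 0) (dot (x 1) (x 2)));
          (-1, dot (dot (x 0) (x 2)) (x 1)); (1, dot (x 0) (dot (x 2) (x 1)))].

Definition lc_dot (c d : lc k unit) : lc k unit :=
  lc_bilin (fun s t => lc_mono (dot s t)) c d.
Fixpoint prelie_t (t : term fop) : lc k unit :=
  match t with
  | Var i => lc_mono (Var i)
  | Node OCirc a b => lc_add (lc_dot (prelie_t a) (prelie_t b))
                             (lc_dot (prelie_t b) (prelie_t a))
  | Node OBr a b => lc_sub (lc_dot (prelie_t a) (prelie_t b))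
                           (lc_dot (prelie_t b) (prelie_t a))
  end.
Definition prelie (c : lc k fop) : lc k unit := lc_bind prelie_t c.

Fixpoint nbr (t : term fop) : nat :=
  match t with
  | Var _ => 0%N
  | Node g a b => ((g == OBr) + nbr a + nbr b)%N
  end.

(* The Lie filtration: y in PreLie(n) (a representative) lies in F^p(n)
   iff it is congruent, modulo the pre-Lie relations, to a linear
   combination of tree composites of o and [-,-] of arity n with at least
   p vertices labelled [-,-]. *)
Definition inF (p n : nat) (y : lc k unit) : Prop :=
  exists2 d : lc k fop, lc_ml n d && all (fun q => (p <= nbr q.2)%N) d &
    tideal R_PreLie (lc_sub y (prelie d)).

Definition part (p : nat) (c : lc k fop) : lc k fop :=
  [seq q <- c | nbr q.2 == p].

(* gr_F PreLie(n) = (+)_p F^p(n)/F^(p+1)(n), represented by combinations of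
   {o,[,]}-monomials: a monomial with p brackets represents the coset of its
   pre-Lie image in F^p/F^(p+1).  K_grPreLie n is the kernel of this
   representation; operadic composition of homogeneous representatives is
   substitution, as in gr_F PreLie. *)
Definition K_grPreLie (n : nat) (c : lc k fop) : Prop :=
  lc_ml n c /\ forall p, inF p.+1 n (prelie (part p c)).

End Concrete.

(* Main.v *)
Require Import Defs.
From HB Require Import structures.
From mathcomp Require Import all_boot all_order all_algebra all_fingroup.
From mathcomp Require Import ring zify.
Set Implicit Arguments. Unset Strict Implicit. Unset Printing Implicit Defensive.
Import GRing.Theory.
Local Open Scope ring_scope.

Definition lin (k : fieldType) (G : eqType) (h : term G -> k) (c : lc k G) : k :=
  \sum_(p <- c) p.1 * h p.2.

Section Lin.
Variables (k : fieldType) (G : eqType).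
Implicit Types (c d : lc k G) (h : term G -> k).

Lemma coefE c t : coef c t = lin (fun m => (m == t)%:R) c.
Proof.
rewrite /coef /lin big_mkcond; apply: eq_bigr => p _.
by case: eqP => _; rewrite ?mulr1 ?mulr0.
Qed.

Lemma lin_nil h : lin h [::] = 0. Proof. by rewrite /lin big_nil. Qed.
Lemma lin_cons h p c : lin h (p :: c) = p.1 * h p.2 + lin h c.
Proof. by rewrite /lin big_cons. Qed.
Lemma lin_cat h c d : lin h (c ++ d) = lin h c + lin h d.
Proof. by rewrite /lin big_cat. Qed.
Lemma lin_scale h a c : lin h (lc_scale a c) = a * lin h c.
Proof. by rewrite /lin big_map mulr_sumr; apply: eq_bigr => p _ /=; rewrite mulrA. Qed.
Lemma lin_sub h c d : lin h (lc_sub c d) = lin h c - lin h d.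
Proof. by rewrite /lc_sub lin_cat lin_scale mulN1r. Qed.
Lemma lin_flatten h (L : seq (lc k G)) : lin h (flatten L) = \sum_(l <- L) lin h l.
Proof. by rewrite /lin big_flatten. Qed.
Lemma lin_mono h u : lin h (lc_mono u) = h u.
Proof. by rewrite /lin /lc_mono big_seq1 mul1r. Qed.
Lemma lin_mapsnd h (f : term G -> term G) c :
  lin h [seq (p.1, f p.2) | p <- c] = lin (fun m => h (f m)) c.
Proof. by rewrite /lin big_map. Qed.
Lemma lin_filter h (P : pred (term G)) c :
  lin h [seq p <- c | P p.2] = lin (fun m => if P m then h m else 0) c.
Proof.
rewrite /lin big_filter big_mkcond; apply: eq_bigr => p _.
by case: (P p.2); rewrite ?mulr0.
Qed.
Lemma linD h1 h2 c : lin h1 c + lin h2 c = lin (fun m => h1 m + h2 m) c.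
Proof. by rewrite /lin -big_split; apply: eq_bigr => p _; rewrite mulrDr. Qed.
Lemma linZ a h c : a * lin h c = lin (fun m => a * h m) c.
Proof. by rewrite /lin mulr_sumr; apply: eq_bigr => p _; rewrite mulrCA. Qed.
Lemma lin0 c : lin (fun _ => 0) c = 0.
Proof. by rewrite /lin big1 // => p _; rewrite mulr0. Qed.
Lemma eq_lin h1 h2 c : h1 =1 h2 -> lin h1 c = lin h2 c.
Proof. by move=> e; apply: eq_bigr => p _; rewrite e. Qed.
Lemma eq_in_lin h1 h2 c : (forall p, p \in c -> h1 p.2 = h2 p.2) -> lin h1 c = lin h2 c.
Proof. by move=> e; rewrite /lin big_seq_cond [RHS]big_seq_cond; apply: eq_bigr => p /andP[/e -> _]. Qed.

Lemma lin_support h c (s : seq (term G)) :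
  uniq s -> (forall p, p \in c -> p.2 \in s) ->
  lin h c = \sum_(m <- s) coef c m * h m.
Proof.
move=> us; elim: c => [|p c IH] sub.
  by rewrite lin_nil big1 // => m _; rewrite /coef big_nil mul0r.
rewrite lin_cons IH; last by move=> q qc; apply: sub; rewrite inE qc orbT.
have ps : p.2 \in s by apply: sub; rewrite inE eqxx.
have cc : forall m, coef (p :: c) m = (if p.2 == m then p.1 else 0) + coef c m.
  by move=> m; rewrite /coef big_cons; case: ifP; rewrite ?add0r.
under [in RHS]eq_bigr => m _ do rewrite cc mulrDl.
rewrite big_split /=; congr (_ + _).
rewrite (big_rem p.2) //= eqxx big1_seq ?addr0 // => m /andP[_ mr].
case: eqP mr => [<-|]; last by rewrite mul0r.
by rewrite mem_rem_uniqF.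
Qed.

Lemma lin_eqv h c d : lc_eqv c d -> lin h c = lin h d.
Proof.
move=> e; set s := undup [seq p.2 | p <- c ++ d].
have us : uniq s by apply: undup_uniq.
rewrite (@lin_support h c s) // ?(@lin_support h d s) //.
- by apply: eq_bigr => m _; rewrite e.
- by move=> p pd; rewrite mem_undup; apply/mapP; exists p; rewrite // mem_cat pd orbT.
- by move=> p pc; rewrite mem_undup; apply/mapP; exists p; rewrite // mem_cat pc.
Qed.

Lemma eqvP c d : (forall h, lin h c = lin h d) -> lc_eqv c d.
Proof. by move=> e t; rewrite !coefE. Qed.
Lemma eqv_lin c d : lc_eqv c d -> forall h, lin h c = lin h d.
Proof. by move=> e h; apply: lin_eqv. Qed.

Lemma eqv_refl c : lc_eqv c c. Proof. by []. Qed.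
Lemma eqv_sym c d : lc_eqv c d -> lc_eqv d c. Proof. by move=> e t. Qed.
Lemma eqv_trans c d e : lc_eqv c d -> lc_eqv d e -> lc_eqv c e.
Proof. by move=> e1 e2 t; rewrite e1. Qed.

Lemma ti_flatten_map (T : eqType) (R : lc k G -> Prop) (f : T -> lc k G) (s : seq T) :
  (forall p, p \in s -> tideal R (f p)) -> tideal R (flatten (map f s)).
Proof.
elim: s => [|a s IH] H /=; first exact: ti_nil.
apply: (ti_add (c := f a)); first by apply: H; rewrite inE eqxx.
by apply: IH => p ps; apply: H; rewrite inE ps orbT.
Qed.

Lemma ti_eqv0 (R : lc k G -> Prop) c : lc_eqv [::] c -> tideal R c.
Proof. by move=> e; apply: ti_eqv e (ti_nil _). Qed.

Lemma ti_sub (R : lc k G -> Prop) c d : tideal R c -> tideal R d -> tideal R (lc_sub c d).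
Proof. by move=> tc td; apply: ti_add tc (ti_scale _ td). Qed.

End Lin.

Section Lin2.
Variables (k : fieldType) (G : eqType).
Implicit Types (c d : lc k G).
Lemma lin_bind (G' : eqType) (h : term G' -> k) (f : term G -> lc k G') c :
  lin h (lc_bind f c) = lin (fun m => lin h (f m)) c.
Proof.
rewrite /lc_bind lin_flatten big_map; apply: eq_bigr => p _.
by rewrite lin_scale.
Qed.

Lemma lin_bilin (G' : eqType) (h : term G' -> k) (f : term G -> term G -> lc k G') c d :
  lin h (lc_bilin f c d) = lin (fun a => lin (fun b => lin h (f a b)) d) c.
Proof.
rewrite /lc_bilin lin_flatten big_allpairs_dep /lin; apply: eq_bigr => p _.
rewrite mulr_sumr; apply: eq_bigr => q _.
by rewrite -/(lin _ _) lin_scale mulrA.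
Qed.

Lemma lin_exch (G' : eqType) (F : term G -> term G' -> k) c (d : lc k G') :
  lin (fun a => lin (fun b => F a b) d) c = lin (fun b => lin (fun a => F a b) c) d.
Proof.
rewrite /lin.
under eq_bigr => p _ do rewrite mulr_sumr.
rewrite exchange_big; apply: eq_bigr => q _.
rewrite mulr_sumr; apply: eq_bigr => p _; ring.
Qed.

End Lin2.

Definition node_bil (k : fieldType) (G : eqType) (g : G) (c d : lc k G) : lc k G :=
  lc_bilin (fun a b => lc_mono (Node g a b)) c d.

Fixpoint tls (k : fieldType) (G : eqType) (S : nat -> lc k G) (t : term G) : lc k G :=
  match t with Var i => S i | Node g a b => node_bil g (tls S a) (tls S b) end.

Definition lsubst (k : fieldType) (G : eqType) (S : nat -> lc k G) (c : lc k G) : lc k G :=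
  lc_bind (tls S) c.

Section Node.
Variables (k : fieldType) (G : eqType).
Implicit Types (c d : lc k G) (h : term G -> k) (S : nat -> lc k G).

Lemma lin_node h g c d :
  lin h (node_bil g c d) = lin (fun a => lin (fun b => h (Node g a b)) d) c.
Proof.
rewrite /node_bil lin_bilin; apply: eq_lin => a; apply: eq_lin => b.
by rewrite lin_mono.
Qed.

Lemma ti_node_l (R : lc k G -> Prop) g c d : tideal R c -> tideal R (node_bil g c d).
Proof.
move=> tc.
apply: (@ti_eqv _ _ _ (flatten [seq lc_scale q.1 (lc_nodel g c q.2) | q <- d])).
  apply: eqvP => h; rewrite lin_node lin_exch lin_flatten big_map {1}/lin.
  by apply: eq_bigr => q _; rewrite -/(lin _ _) lin_scale /lc_nodel (lin_mapsnd _ (fun m => Node g m q.2)).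
apply: ti_flatten_map => q _; apply: ti_scale; exact: ti_nodel.
Qed.

Lemma ti_node_r (R : lc k G -> Prop) g c d : tideal R d -> tideal R (node_bil g c d).
Proof.
move=> td.
apply: (@ti_eqv _ _ _ (flatten [seq lc_scale q.1 (lc_noder g q.2 d) | q <- c])).
  apply: eqvP => h; rewrite lin_node lin_flatten big_map {1}/lin.
  by apply: eq_bigr => q _; rewrite -/(lin _ _) lin_scale /lc_noder (lin_mapsnd _ (fun m => Node g q.2 m)).
apply: ti_flatten_map => q _; apply: ti_scale; exact: ti_noder.
Qed.

Lemma node_eqv g c c' d d' : lc_eqv c c' -> lc_eqv d d' ->
  lc_eqv (node_bil g c d) (node_bil g c' d').
Proof.
move=> e1 e2; apply: eqvP => h; rewrite !lin_node (lin_eqv _ e1).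
by apply: eq_lin => a; rewrite (lin_eqv _ e2).
Qed.

Lemma lin_lsubst h S c : lin h (lsubst S c) = lin (fun m => lin h (tls S m)) c.
Proof. exact: lin_bind. Qed.

Lemma tls_tsubst S (s : nat -> term G) t :
  tls S (tsubst s t) = tls (fun i => tls S (s i)) t.
Proof. by elim: t => [i|g a IHa b IHb] //=; rewrite IHa IHb. Qed.

Lemma lsubst_subst S (s : nat -> term G) c :
  lsubst S (lc_subst s c) = lsubst (fun i => tls S (s i)) c.
Proof.
rewrite /lsubst /lc_bind /lc_subst -map_comp; congr flatten; apply: eq_map => p /=.
by rewrite tls_tsubst.
Qed.

Lemma lsubst_cat S c d : lsubst S (c ++ d) = lsubst S c ++ lsubst S d.
Proof. by rewrite /lsubst /lc_bind map_cat flatten_cat. Qed.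

Lemma lsubst_scale S a c : lc_eqv (lsubst S (lc_scale a c)) (lc_scale a (lsubst S c)).
Proof. by apply: eqvP => h; rewrite lin_scale !lin_lsubst lin_scale. Qed.

Lemma lsubst_eqv S c d : lc_eqv c d -> lc_eqv (lsubst S c) (lsubst S d).
Proof. by move=> e; apply: eqvP => h; rewrite !lin_lsubst (lin_eqv _ e). Qed.

Lemma lsubst_nodel S g c t :
  lc_eqv (lsubst S (lc_nodel g c t)) (node_bil g (lsubst S c) (tls S t)).
Proof.
apply: eqvP => h; rewrite lin_lsubst /lc_nodel (lin_mapsnd _ (fun m => Node g m t)) lin_node lin_lsubst.
by apply: eq_lin => m /=; rewrite lin_node.
Qed.

Lemma lsubst_noder S g c t :
  lc_eqv (lsubst S (lc_noder g t c)) (node_bil g (tls S t) (lsubst S c)).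
Proof.
apply: eqvP => h; rewrite lin_lsubst /lc_noder (lin_mapsnd _ (fun m => Node g t m)) lin_node lin_exch lin_lsubst.
apply: eq_lin => m /=; by rewrite lin_node lin_exch.
Qed.

Lemma lsubst_node S g c d :
  lc_eqv (lsubst S (node_bil g c d)) (node_bil g (lsubst S c) (lsubst S d)).
Proof.
apply: eqvP => h; rewrite lin_lsubst !lin_node lin_lsubst.
apply: eq_lin => a /=.
transitivity (lin (fun b => lin (fun u => lin (fun v => h (Node g u v)) (tls S b)) (tls S a)) d).
  by apply: eq_lin => b; rewrite lin_node.
by rewrite lin_exch; apply: eq_lin => u; rewrite lin_lsubst.
Qed.

End Node.

Section PL.
Variable k : fieldType.
Implicit Types (c d : lc k unit) (h : term unit -> k) (S T : nat -> lc k unit).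

Definition Rlit : lc k unit :=
  [:: (1, dot (dot (x 0) (x 1)) (x 2)); (-1, dot (x 0) (dot (x 1) (x 2)));
      (-1, dot (dot (x 0) (x 2)) (x 1)); (1, dot (x 0) (dot (x 2) (x 1)))].

Lemma R_PreLie_lit : R_PreLie Rlit. Proof. by []. Qed.

Definition trip T (F : term unit -> term unit -> term unit -> k) :=
  lin (fun a => lin (fun b => lin (fun e => F a b e) (T 2%N)) (T 1%N)) (T 0%N).

Lemma lsubst_Rlit T h :
  lin h (lsubst T Rlit) =
  trip T (fun a b e => h (Node tt (Node tt a b) e) - h (Node tt a (Node tt b e))
                     - h (Node tt (Node tt a e) b) + h (Node tt a (Node tt e b))).
Proof.
rewrite lin_lsubst /Rlit !lin_cons lin_nil addr0 /= /dot /x /=.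
rewrite !lin_node.
have E2 : forall A B C, lin (fun a => lin (fun b => h (Node tt a b)) (node_bil tt B C)) A =
   lin (fun a => lin (fun b => lin (fun e => h (Node tt a (Node tt b e))) C) B) A.
  by move=> A B C; apply: eq_lin => a; rewrite lin_node.
rewrite !E2 /trip.
have -> : lin (fun a => lin (fun b => lin (fun e => h (Node tt (Node tt a b) e)) (T 1%N))
      (T 2%N)) (T 0%N) = lin (fun a => lin (fun b => lin (fun e => h (Node tt (Node tt a e) b))
      (T 2%N)) (T 1%N)) (T 0%N).
  by apply: eq_lin => a; rewrite lin_exch.
have -> : lin (fun a => lin (fun b => lin (fun e => h (Node tt a (Node tt b e))) (T 1%N))
      (T 2%N)) (T 0%N) = lin (fun a => lin (fun b => lin (fun e => h (Node tt a (Node tt e b)))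
      (T 2%N)) (T 1%N)) (T 0%N).
  by apply: eq_lin => a; rewrite lin_exch.
rewrite !linZ !linD; apply: eq_lin => a.
rewrite !linZ !linD; apply: eq_lin => b.
rewrite !linZ !linD; apply: eq_lin => e.
ring.
Qed.

Lemma ti_lsubst_Rlit T : tideal (@R_PreLie k) (lsubst T Rlit).
Proof.
set E := flatten [seq flatten [seq flatten [seq lc_scale (a.1 * b.1 * e.1)
      (lc_subst (fun i => nth (Var 0) [:: a.2; b.2; e.2] i) Rlit) | e <- T 2%N]
      | b <- T 1%N] | a <- T 0%N].
apply: (@ti_eqv _ _ _ E).
  apply: eqvP => h; rewrite lsubst_Rlit /trip /E.
  rewrite lin_flatten big_map [RHS]/lin; apply: eq_bigr => a _.
  rewrite lin_flatten big_map mulr_sumr; apply: eq_bigr => b _.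
  rewrite lin_flatten big_map !mulr_sumr; apply: eq_bigr => e _.
  rewrite lin_scale /lc_subst /Rlit /= !lin_cons lin_nil /= /dot /x /=.
  ring.
apply: ti_flatten_map => a _; apply: ti_flatten_map => b _; apply: ti_flatten_map => e _.
by apply: ti_scale; apply: ti_rel; apply: R_PreLie_lit.
Qed.

Lemma ti_lsubst S y : tideal (@R_PreLie k) y -> tideal (@R_PreLie k) (lsubst S y).
Proof.
elim=> {y}.
- move=> r s ->; rewrite lsubst_subst; exact: ti_lsubst_Rlit.
- by move=> c d _ tc _ td; rewrite /lc_add lsubst_cat; apply: ti_add.
- move=> a c _ tc; apply: ti_eqv (eqv_sym (lsubst_scale _ _ _)) _; exact: ti_scale.
- by move=> c d e _ tc; apply: ti_eqv (lsubst_eqv _ e) tc.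
- exact: ti_nil.
- move=> g c t _ tc; apply: ti_eqv (eqv_sym (lsubst_nodel _ _ _ _)) _; exact: ti_node_l.
- move=> g t c _ tc; apply: ti_eqv (eqv_sym (lsubst_noder _ _ _ _)) _; exact: ti_node_r.
Qed.

End PL.

Section Prelie.
Variable k : fieldType.
Implicit Types (c d : lc k fop) (h : term unit -> k) (S T : nat -> lc k unit).

Definition sgn (g : fop) : k := if g is OCirc then 1 else -1.

Lemma lin_prelie_node h g a b :
  lin h (prelie_t k (Node g a b)) =
  lin h (node_bil tt (prelie_t k a) (prelie_t k b))
  + sgn g * lin h (node_bil tt (prelie_t k b) (prelie_t k a)).
Proof.
case: g => /=; rewrite /lc_add /lc_sub ?lin_cat ?lin_scale /lc_dot /node_bil /dot;
  by rewrite ?mul1r.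
Qed.

Lemma lin_prelie h c : lin h (prelie c) = lin (fun m => lin h (prelie_t k m)) c.
Proof. exact: lin_bind. Qed.

Lemma prelie_eqv c d : lc_eqv c d -> lc_eqv (prelie c) (prelie d).
Proof. by move=> e; apply: eqvP => h; rewrite !lin_prelie (lin_eqv _ e). Qed.

Lemma prelie_subst (s : nat -> term fop) t :
  lc_eqv (prelie_t k (tsubst s t)) (lsubst (fun i => prelie_t k (s i)) (prelie_t k t)).
Proof.
set P := fun i => prelie_t k (s i).
elim: t => [i|g a IHa b IHb].
  by apply: eqvP => h; rewrite lin_lsubst /= lin_mono.
apply: eqvP => h.
have -> : tsubst s (Node g a b) = Node g (tsubst s a) (tsubst s b) by [].
rewrite lin_prelie_node (lin_eqv _ (node_eqv _ IHa IHb)) (lin_eqv _ (node_eqv _ IHb IHa)).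
rewrite lin_lsubst lin_prelie_node -!lin_lsubst.
by rewrite -!(lin_eqv _ (lsubst_node _ _ _ _)).
Qed.

Lemma prelie_lsubst (s : nat -> term fop) c :
  lc_eqv (prelie (lc_subst s c)) (lsubst (fun i => prelie_t k (s i)) (prelie c)).
Proof.
apply: eqvP => h; rewrite lin_prelie /lc_subst (lin_mapsnd _ (tsubst s)).
rewrite lin_lsubst lin_prelie; apply: eq_lin => m.
by rewrite (lin_eqv _ (prelie_subst s m)) lin_lsubst.
Qed.

Lemma prelie_nodel h g c t :
  lin h (prelie (lc_nodel g c t)) =
  lin h (node_bil tt (prelie c) (prelie_t k t))
  + sgn g * lin h (node_bil tt (prelie_t k t) (prelie c)).
Proof.
rewrite lin_prelie /lc_nodel (lin_mapsnd _ (fun m => Node g m t)).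
rewrite !lin_node lin_prelie lin_exch lin_prelie linZ linD; apply: eq_lin => m.
by rewrite lin_prelie_node !lin_node; congr (_ + _ * _); rewrite lin_exch.
Qed.

Lemma prelie_noder h g c t :
  lin h (prelie (lc_noder g t c)) =
  lin h (node_bil tt (prelie_t k t) (prelie c))
  + sgn g * lin h (node_bil tt (prelie c) (prelie_t k t)).
Proof.
rewrite lin_prelie /lc_noder (lin_mapsnd _ (fun m => Node g t m)).
rewrite !lin_node lin_exch lin_prelie lin_prelie linZ linD; apply: eq_lin => m.
by rewrite lin_prelie_node !lin_node lin_exch.
Qed.

End Prelie.

Definition pj (k : fieldType) (G : eqType) (P : pred (seq nat)) (c : lc k G) : lc k G :=
  [seq q <- c | P (vars q.2)].

Definition Pinv (P : pred (seq nat)) := forall s1 s2, perm_eq s1 s2 -> P s1 = P s2.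

Section Part.
Variable k : fieldType.
Implicit Types (c d : lc k fop) (h : term unit -> k).

Definition Qp c := forall p, exists2 d : lc k fop, all (fun q => (p < nbr q.2)%N) d &
  tideal (@R_PreLie k) (lc_sub (prelie (part p c)) (prelie d)).

Lemma part_cat p c d : part p (c ++ d) = part p c ++ part p d.
Proof. exact: filter_cat. Qed.
Lemma part_scale p a c : part p (lc_scale a c) = lc_scale a (part p c).
Proof. by rewrite /part /lc_scale filter_map. Qed.
Lemma lin_part (h : term fop -> k) p c :
  lin h (part p c) = lin (fun m => if nbr m == p then h m else 0) c.
Proof. exact: (lin_filter h (fun m => nbr m == p)). Qed.
Lemma part_eqv p c d : lc_eqv c d -> lc_eqv (part p c) (part p d).
Proof. by move=> e; apply: eqvP => h; rewrite !lin_part (lin_eqv _ e). Qed.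

Lemma part_nodel p g c t :
  part p (lc_nodel g c t) =
  if ((g == OBr) + nbr t <= p)%N then lc_nodel g (part (p - ((g == OBr) + nbr t)) c) t
  else [::].
Proof.
rewrite /part /lc_nodel filter_map; case: leqP => H.
  congr map; apply: eq_filter => q /=; rewrite /preim /=.
  move: H; move: (nat_of_bool (g == OBr)) (nbr q.2) (nbr t) => b n1 n2 H.
  apply/eqP/eqP => E; lia.
rewrite (@eq_filter _ _ pred0) ?filter_pred0 // => q /=; rewrite /preim /=.
apply/eqP; move: H; move: (nat_of_bool (g == OBr)) (nbr q.2) (nbr t) => b n1 n2 H; lia.
Qed.

Lemma part_noder p g c t :
  part p (lc_noder g t c) =
  if ((g == OBr) + nbr t <= p)%N then lc_noder g t (part (p - ((g == OBr) + nbr t)) c)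
  else [::].
Proof.
rewrite /part /lc_noder filter_map; case: leqP => H.
  congr map; apply: eq_filter => q /=; rewrite /preim /=.
  move: H; move: (nat_of_bool (g == OBr)) (nbr q.2) (nbr t) => b n1 n2 H.
  apply/eqP/eqP => E; lia.
rewrite (@eq_filter _ _ pred0) ?filter_pred0 // => q /=; rewrite /preim /=.
apply/eqP; move: H; move: (nat_of_bool (g == OBr)) (nbr q.2) (nbr t) => b n1 n2 H; lia.
Qed.

Lemma lin_node_subl (G : eqType) (h : term G -> k) g A B C :
  lin h (node_bil g (lc_sub A B) C) = lin h (node_bil g A C) - lin h (node_bil g B C).
Proof. by rewrite (lin_node h g (lc_sub A B) C) (lin_node h g A C) (lin_node h g B C) (lin_sub _ A B). Qed.
Lemma lin_node_subr (G : eqType) (h : term G -> k) g A B C :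
  lin h (node_bil g C (lc_sub A B)) = lin h (node_bil g C A) - lin h (node_bil g C B).
Proof.
rewrite (lin_node h g C (lc_sub A B)) (lin_node h g C A) (lin_node h g C B).
rewrite lin_exch (lin_sub _ A B); congr (_ - _); exact: lin_exch.
Qed.

Lemma Q_tideal (Hrel : forall r s, R_FMan r -> Qp (lc_subst s r)) c :
  tideal (@R_FMan k) c -> Qp c.
Proof.
elim=> {c}.
- by move=> r s Hr; apply: Hrel.
- move=> c d _ IHc _ IHd p.
  have [d1 a1 t1] := IHc p; have [d2 a2 t2] := IHd p.
  exists (d1 ++ d2); first by rewrite all_cat a1 a2.
  apply: (ti_eqv _ (ti_add t1 t2)); apply: eqvP => h.
  by rewrite /lc_add lin_cat !lin_sub part_cat !lin_prelie !lin_cat; ring.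
- move=> a c _ IHc p; have [d1 a1 t1] := IHc p.
  exists (lc_scale a d1); first by rewrite /lc_scale all_map.
  apply: (ti_eqv _ (ti_scale a t1)); apply: eqvP => h.
  by rewrite lin_scale !lin_sub part_scale !lin_prelie !lin_scale; ring.
- move=> c d e _ IHc p; have [d1 a1 t1] := IHc p.
  exists d1 => //; apply: (ti_eqv _ t1); apply: eqvP => h.
  by rewrite !lin_sub !lin_prelie (lin_eqv _ (part_eqv p e)).
- by move=> p; exists [::] => //; exact: ti_nil.
- move=> g c t _ IHc p; rewrite part_nodel; case: leqP => H; last first.
    by exists [::] => //; exact: ti_nil.
  have [d1 a1 t1] := IHc (p - ((g == OBr) + nbr t))%N.
  exists (lc_nodel g d1 t).
    rewrite /lc_nodel all_map; apply/allP => q /(allP a1) /=; rewrite /preim /=.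
    move: H; move: (nat_of_bool (g == OBr)) (nbr q.2) (nbr t) => b n1 n2 H E; lia.
  set Y := lc_sub _ _ in t1.
  apply: (@ti_eqv _ _ _ (node_bil tt Y (prelie_t k t) ++ lc_scale (sgn k g) (node_bil tt (prelie_t k t) Y))).
    apply: eqvP => h; rewrite lin_cat lin_scale /Y lin_node_subl lin_node_subr.
    by rewrite lin_sub !prelie_nodel; ring.
  by apply: ti_add; [apply: ti_node_l | apply: ti_scale; apply: ti_node_r].
- move=> g t c _ IHc p; rewrite part_noder; case: leqP => H; last first.
    by exists [::] => //; exact: ti_nil.
  have [d1 a1 t1] := IHc (p - ((g == OBr) + nbr t))%N.
  exists (lc_noder g t d1).
    rewrite /lc_noder all_map; apply/allP => q /(allP a1) /=; rewrite /preim /=.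
    move: H; move: (nat_of_bool (g == OBr)) (nbr q.2) (nbr t) => b n1 n2 H E; lia.
  set Y := lc_sub _ _ in t1.
  apply: (@ti_eqv _ _ _ (node_bil tt (prelie_t k t) Y ++ lc_scale (sgn k g) (node_bil tt Y (prelie_t k t)))).
    apply: eqvP => h; rewrite lin_cat lin_scale /Y lin_node_subl lin_node_subr.
    by rewrite lin_sub !prelie_noder; ring.
  by apply: ti_add; [apply: ti_node_r | apply: ti_scale; apply: ti_node_l].
Qed.

End Part.

Section Proj.
Variable k : fieldType.

Lemma pj_cat (G : eqType) P (c d : lc k G) : pj P (c ++ d) = pj P c ++ pj P d.
Proof. exact: filter_cat. Qed.
Lemma pj_scale (G : eqType) P a (c : lc k G) : pj P (lc_scale a c) = lc_scale a (pj P c).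
Proof. by rewrite /pj /lc_scale filter_map. Qed.
Lemma pj_sub (G : eqType) P (c d : lc k G) : pj P (lc_sub c d) = lc_sub (pj P c) (pj P d).
Proof. by rewrite /lc_sub pj_cat pj_scale. Qed.

Lemma ti_pj (y : lc k unit) : tideal (@R_PreLie k) y ->
  forall P, Pinv P -> tideal (@R_PreLie k) (pj P y).
Proof.
elim=> {y}.
- move=> r s -> P HP; rewrite /pj /lc_subst /=.
  set v0 := vars (s 0%N); set v1 := vars (s 1%N); set v2 := vars (s 2%N).
  have e2 : P (v0 ++ v1 ++ v2) = P ((v0 ++ v1) ++ v2) by rewrite catA.
  have e3 : P ((v0 ++ v2) ++ v1) = P ((v0 ++ v1) ++ v2).
    by apply: HP; rewrite -!catA perm_cat2l perm_catC.
  have e4 : P (v0 ++ v2 ++ v1) = P ((v0 ++ v1) ++ v2).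
    by apply: HP; rewrite catA -!catA perm_cat2l perm_catC.
  rewrite e2 e3 e4; case: (P _) => /=; last exact: ti_nil.
  exact: (ti_rel s (R_PreLie_lit k)).
- by move=> c d _ tc _ td P HP; rewrite /lc_add pj_cat; apply: ti_add; [apply: tc | apply: td].
- by move=> a c _ tc P HP; rewrite pj_scale; apply: ti_scale; apply: tc.
- move=> c d e _ tc P HP; apply: (ti_eqv _ (tc P HP)); apply: eqvP => h.
  rewrite /pj (lin_filter h (fun m => P (vars m))) (lin_filter h (fun m => P (vars m))).
  exact: lin_eqv.
- by move=> P HP; exact: ti_nil.
- move=> g c t _ tc P HP.
  have -> : pj P (lc_nodel g c t) = lc_nodel g (pj (fun s => P (s ++ vars t)) c) t.
    by rewrite /pj /lc_nodel filter_map.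
  apply: ti_nodel; apply: tc => s1 s2 e; apply: HP; by rewrite perm_cat2r.
- move=> g t c _ tc P HP.
  have -> : pj P (lc_noder g t c) = lc_noder g t (pj (fun s => P (vars t ++ s)) c).
    by rewrite /pj /lc_noder filter_map.
  apply: ti_noder; apply: tc => s1 s2 e; apply: HP; by rewrite perm_cat2l.
Qed.

Lemma all_flatten_map (T U : Type) (Q : pred U) (f : T -> seq U) (s : seq T) :
  all Q (flatten (map f s)) = all (fun z => all Q (f z)) s.
Proof. by elim: s => //= a s IH; rewrite all_cat IH. Qed.

Lemma all_node (G : eqType) (Q : pred (term G)) g (c d : lc k G) :
  all (fun z => all (fun w => Q (Node g z.2 w.2)) d) c ->
  all (fun u => Q u.2) (node_bil g c d).
Proof.
rewrite /node_bil /lc_bilin; elim: c => // p c IH; rewrite [all _ (_ :: _)]/= => /andP[hp hc].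
rewrite allpairs_cons flatten_cat all_cat IH // andbT all_flatten_map.
by apply/allP => q /(allP hp) /=; rewrite andbT.
Qed.

Lemma prelie_t_vars t :
  all (fun u => perm_eq (vars u.2) (vars t)) (prelie_t k t).
Proof.
elim: t => [i|g a IHa b IHb] /=; first by rewrite perm_refl.
have H1 : all (fun u => perm_eq (vars u.2) (vars a ++ vars b))
              (lc_dot (prelie_t k a) (prelie_t k b)).
  apply: (all_node (Q := fun u => perm_eq (vars u) (vars a ++ vars b))).
  apply/allP => z /(allP IHa) za; apply/allP => w /(allP IHb) wb /=.
  exact: perm_cat.
have H2 : all (fun u => perm_eq (vars u.2) (vars a ++ vars b))
              (lc_dot (prelie_t k b) (prelie_t k a)).
  apply: (all_node (Q := fun u => perm_eq (vars u) (vars a ++ vars b))).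
  apply/allP => z /(allP IHb) zb; apply/allP => w /(allP IHa) wa /=.
  by rewrite perm_catC; exact: perm_cat.
case: g; rewrite /lc_add /lc_sub all_cat H1 //= /lc_scale all_map.
all: by [].
Qed.

Lemma pj_prelie P (c : lc k fop) : Pinv P -> pj P (prelie c) = prelie (pj P c).
Proof.
move=> HP; elim: c => // p c IH.
rewrite /prelie /lc_bind /= pj_cat -/(lc_bind _ _) -/(prelie c) IH /=.
have := prelie_t_vars p.2; set X := prelie_t k p.2 => hX.
case E: (P (vars p.2)) => /=.
  congr (_ ++ _); rewrite pj_scale; congr lc_scale; apply/all_filterP.
  by apply/allP => u /(allP hX) e; rewrite (HP _ _ e).
rewrite pj_scale {1}/pj (@eq_in_filter _ _ pred0) ?filter_pred0 //.
by move=> u /(allP hX) e /=; rewrite (HP _ _ e) E.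
Qed.

Lemma K_FMan_grPreLie
  (Hrel : forall (r : lc k fop) s, R_FMan r -> Qp (lc_subst s r)) n (c : lc k fop) :
  K_FMan n c -> K_grPreLie n c.
Proof.
case=> mlc tc; split => // p.
have [d ad td] := Q_tideal Hrel tc p.
set P : pred (seq nat) := fun s => perm_eq s (iota 0 n).
have HP : Pinv P by move=> s1 s2 /permPl e; rewrite /P e.
exists (pj P d).
  apply/andP; split; first by apply: filter_all.
  by apply/allP => q; rewrite mem_filter => /andP[_ /(allP ad)].
have := ti_pj td HP; rewrite pj_sub !pj_prelie //.
have -> // : pj P (part p c) = part p c.
apply/all_filterP; apply/allP => q; rewrite mem_filter => /andP[_ /(allP mlc)].
by [].
Qed.

Lemma K_self n (X : lc k fop) : lc_ml n X -> K_grPreLie n (lc_sub X X).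
Proof.
move=> mX; split.
  by rewrite /lc_ml /lc_sub all_cat; apply/andP; split; [exact: mX | rewrite /lc_scale all_map].
move=> p; exists [::] => //.
apply: ti_eqv0; apply: eqvP => h.
by rewrite lin_nil lin_sub lin_prelie lin_part /lc_sub lin_cat lin_scale lin_nil; ring.
Qed.

End Proj.

Section ML.
Variables (k : fieldType) (G : eqType).
Local Open Scope nat_scope.

Lemma vars_tsubst (f : nat -> term G) (t : term G) :
  vars (tsubst f t) = flatten [seq vars (f j) | j <- vars t].
Proof.
elim: t => [i|g a IHa b IHb] /=; first by rewrite cats0.
by rewrite IHa IHb map_cat flatten_cat.
Qed.

Lemma flatten_map1 (h : nat -> nat) (s : seq nat) :
  flatten [seq [:: h j] | j <- s] = map h s.
Proof. by elim: s => //= a s ->. Qed.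

Lemma vars_tsubst_var (h : nat -> nat) (t : term G) :
  vars (tsubst (fun j => Var (h j)) t) = map h (vars t).
Proof. by rewrite vars_tsubst flatten_map1. Qed.

Lemma size_vars_gt0 (t : term G) : (0 < size (vars t))%N.
Proof. by elim: t => //= g a IHa b IHb; rewrite size_cat addn_gt0 IHa. Qed.

Lemma all_bilin (G' : eqType) (Q : pred (term G')) (f : term G -> term G -> lc k G')
  (c d : lc k G) :
  all (fun z => all (fun w => all (fun u => Q u.2) (f z.2 w.2)) d) c ->
  all (fun u => Q u.2) (lc_bilin f c d).
Proof.
rewrite /lc_bilin; elim: c => // p c IH; rewrite [all _ (_ :: _)]/= => /andP[hp hc].
rewrite allpairs_cons flatten_cat all_cat IH // andbT all_flatten_map.
apply/allP => q /(allP hp) /= hq; rewrite /lc_scale all_map.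
exact: hq.
Qed.

Lemma ml_act n (s : 'S_n) (c : lc k G) : lc_ml n c -> lc_ml n (Defs.act s c).
Proof.
move=> mc; rewrite /lc_ml /Defs.act /lc_subst all_map; apply/allP => p /(allP mc) mp /=.
rewrite /preim /= /ml vars_tsubst_var.
apply: (perm_trans (perm_map _ mp)).
rewrite -val_enum_ord -map_comp.
have -> : [seq (fun j => odflt j (omap (fun j' : 'I_n => val (s j')) (insub j))) (val i)
           | i <- enum 'I_n] = map val (map s (enum 'I_n)).
  rewrite -[in RHS]map_comp -map_comp -enumT; apply: eq_map => i /=; by rewrite valK.
apply: perm_map; apply: uniq_perm.
- by rewrite (map_inj_uniq (@perm_inj _ s)) enum_uniq.
- exact: enum_uniq.
- move=> i; rewrite mem_enum; apply/mapP; exists (s^-1 i)%g; first by rewrite mem_enum.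
  by rewrite permKV.
Qed.

Lemma ml_pcomp_t m n i (t s : term G) : (i < m)%N -> ml m t -> ml n s ->
  ml (m + n).-1 (pcomp_t i n t s).
Proof.
move=> im mt ms.
have n0 : (0 < n)%N by move: (perm_size ms) (size_vars_gt0 s); rewrite size_iota => ->.
rewrite /ml /pcomp_t vars_tsubst.
set F := fun j => _.
apply: (perm_trans (perm_flatten (perm_map _ mt))).
have -> : iota 0 m = iota 0 i ++ i :: iota i.+1 (m - i.+1).
  have {1}-> : m = (i + (1 + (m - i.+1)))%N by lia.
  by rewrite iotaD iotaD /= add0n addn1.
have -> : ((m + n).-1 = i + (n + (m - i.+1)))%N by lia.
rewrite iotaD iotaD add0n map_cat flatten_cat /=.
apply: perm_cat.
  have -> : [seq F j | j <- iota 0 i] = [seq [:: j] | j <- iota 0 i].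
    apply/eq_in_map => j; rewrite mem_iota add0n => /andP[_ ji].
    by rewrite /F ji.
  by rewrite flatten_map1 map_id.
apply: perm_cat.
  rewrite /F ltnn eqxx vars_tsubst_var.
  apply: (perm_trans (perm_map _ ms)).
  have E : [seq j + i | j <- iota 0 n] = iota i n.
    by rewrite -{2}(addn0 i) iotaDl; apply: eq_map => j; rewrite addnC.
  by rewrite E perm_refl.
have -> : [seq F j | j <- iota i.+1 (m - i.+1)] =
          [seq [:: (j + n).-1] | j <- iota i.+1 (m - i.+1)].
  apply/eq_in_map => j; rewrite mem_iota => /andP[ij _].
  rewrite /F ltnNge ltnW //=.
  by have -> : (j == i) = false by apply/eqP; lia.
rewrite flatten_map1.
have E : [seq (j + n).-1 | j <- iota i.+1 (m - i.+1)] = iota (i + n) (m - i.+1).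
  rewrite -{1}(addn0 i.+1) -(addn0 (i + n)) !iotaDl -map_comp.
  by apply: eq_map => j /=; lia.
by rewrite E perm_refl.
Qed.

Lemma ml_pcomp m n i (c d : lc k G) : (i < m)%N -> lc_ml m c -> lc_ml n d ->
  lc_ml (m + n).-1 (Defs.pcomp i n c d).
Proof.
move=> im mc md; rewrite /lc_ml /Defs.pcomp.
apply: (all_bilin (Q := fun u => ml (m + n).-1 u)).
apply/allP => z /(allP mc) mz; apply/allP => w /(allP md) mw /=.
by rewrite andbT; apply: ml_pcomp_t.
Qed.

End ML.

Inductive inst := ISub of term unit & term unit & term unit
  | IL of nat & nat & nat & nat | IR of nat & nat & nat & nat.

Section Gen.
Variable R : pzRingType.
Definition glc (G : Type) := seq (R * term G).
Definition gscale (A : Type) (a : R) (c : seq (R * A)) : seq (R * A) :=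
  [seq (a * p.1, p.2) | p <- c].
Definition gsub (A : Type) (c d : seq (R * A)) : seq (R * A) := c ++ gscale (-1) d.
Definition gbind (A B : Type) (f : A -> seq (R * B)) (c : seq (R * A)) : seq (R * B) :=
  flatten [seq gscale p.1 (f p.2) | p <- c].
Definition gbilin (A B : Type) (f : A -> A -> seq (R * B)) (c d : seq (R * A)) :=
  flatten [seq gscale (p.1 * q.1) (f p.2 q.2) | p <- c, q <- d].
Definition gmono (A : Type) (u : A) : seq (R * A) := [:: (1, u)].
Definition gdot (c d : glc unit) : glc unit :=
  gbilin (fun s t => gmono (Node tt s t)) c d.
Fixpoint gprelie_t (t : term fop) : glc unit :=
  match t with
  | Var i => gmono (Var i)
  | Node OCirc a b => gdot (gprelie_t a) (gprelie_t b) ++ gdot (gprelie_t b) (gprelie_t a)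
  | Node OBr a b => gsub (gdot (gprelie_t a) (gprelie_t b)) (gdot (gprelie_t b) (gprelie_t a))
  end.
Definition gprelie (c : glc fop) : glc unit := gbind gprelie_t c.
Definition gsubst (G : Type) (s : nat -> term G) (c : glc G) : glc G :=
  [seq (p.1, tsubst s p.2) | p <- c].
Definition gnodel (c : glc unit) (t : term unit) : glc unit :=
  [seq (p.1, Node tt p.2 t) | p <- c].
Definition gnoder (t : term unit) (c : glc unit) : glc unit :=
  [seq (p.1, Node tt t p.2) | p <- c].
Definition gRlit : glc unit :=
  [:: (1, dot (dot (x 0) (x 1)) (x 2)); (-1, dot (x 0) (dot (x 1) (x 2)));
      (-1, dot (dot (x 0) (x 2)) (x 1)); (1, dot (x 0) (dot (x 2) (x 1)))].
Definition sub3 (a b c : term unit) (i : nat) : term unit := nth (Var 0) [:: a; b; c] i.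
Definition ginst (i : inst) : glc unit :=
  match i with
  | ISub a b c => gsubst (sub3 a b c) gRlit
  | IL a b c y => gnodel (gsubst (sub3 (Var a) (Var b) (Var c)) gRlit) (Var y)
  | IR y a b c => gnoder (Var y) (gsubst (sub3 (Var a) (Var b) (Var c)) gRlit)
  end.
Definition gcert (cs : seq (R * inst)) : glc unit := gbind ginst cs.
End Gen.

Definition mapc (R S : pzRingType) (f : R -> S) (A : Type) (c : seq (R * A)) : seq (S * A) :=
  [seq (f p.1, p.2) | p <- c].

Section Map.
Variables (R S : pzRingType) (f : {rmorphism R -> S}).

Lemma mapc_cat A (c d : seq (R * A)) : mapc f (c ++ d) = mapc f c ++ mapc f d.
Proof. exact: map_cat. Qed.
Lemma mapc_scale A a (c : seq (R * A)) : mapc f (gscale a c) = gscale (f a) (mapc f c).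
Proof. by rewrite /mapc /gscale -!map_comp; apply: eq_map => p /=; rewrite rmorphM. Qed.
Lemma mapc_sub A (c d : seq (R * A)) : mapc f (gsub c d) = gsub (mapc f c) (mapc f d).
Proof. by rewrite /gsub mapc_cat mapc_scale rmorphN1. Qed.
Lemma mapc_flatten A (L : seq (seq (R * A))) : mapc f (flatten L) = flatten (map (fun l => mapc f l) L).
Proof. by elim: L => //= l L IH; rewrite mapc_cat IH. Qed.
Lemma mapc_bind A B (F : A -> seq (R * B)) (G : A -> seq (S * B)) (c : seq (R * A)) :
  (forall a, mapc f (F a) = G a) -> mapc f (gbind F c) = gbind G (mapc f c).
Proof.
move=> e; rewrite /gbind mapc_flatten -!map_comp; congr flatten; apply: eq_map => p /=.
by rewrite mapc_scale e.
Qed.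
Lemma mapc_dot (c d : glc R unit) : mapc f (gdot c d) = gdot (mapc f c) (mapc f d).
Proof.
rewrite /gdot /gbilin mapc_flatten; congr flatten.
elim: c => // p c IH; rewrite [mapc f (p :: c)]/= !allpairs_cons map_cat IH; congr (_ ++ _).
rewrite -!map_comp; apply: eq_map => q /=.
by rewrite !mulr1 rmorphM.
Qed.
Lemma mapc_prelie_t t : mapc f (gprelie_t R t) = gprelie_t S t.
Proof.
elim: t => [i|[] a IHa b IHb] /=; first by rewrite /mapc /= rmorph1.
  by rewrite mapc_cat !mapc_dot IHa IHb.
by rewrite mapc_sub !mapc_dot IHa IHb.
Qed.
Lemma mapc_prelie c : mapc f (gprelie c) = gprelie (mapc f c).
Proof. exact: mapc_bind mapc_prelie_t. Qed.
Lemma mapc_subst G s (c : glc R G) : mapc f (gsubst s c) = gsubst s (mapc f c).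
Proof. by rewrite /mapc /gsubst -!map_comp. Qed.
Lemma mapc_Rlit : mapc f (gRlit R) = gRlit S.
Proof. by rewrite /mapc /gRlit /= rmorph1 rmorphN1. Qed.
Lemma mapc_nodel c t : mapc f (gnodel c t) = gnodel (mapc f c) t.
Proof. by rewrite /mapc /gnodel -!map_comp. Qed.
Lemma mapc_noder c t : mapc f (gnoder t c) = gnoder t (mapc f c).
Proof. by rewrite /mapc /gnoder -!map_comp. Qed.
Lemma mapc_inst i : mapc f (ginst R i) = ginst S i.
Proof.
by case: i => [a b c|a b c y|y a b c]; rewrite /ginst ?mapc_nodel ?mapc_noder mapc_subst mapc_Rlit.
Qed.
Lemma mapc_cert cs : mapc f (gcert cs) = gcert (mapc f cs).
Proof. exact: mapc_bind mapc_inst. Qed.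
End Map.

Section Conv.
Variable k : fieldType.

Lemma prelie_t_g t : prelie_t k t = gprelie_t k t.
Proof. by elim: t => [i|[] a IHa b IHb] //=; rewrite IHa IHb. Qed.
Lemma prelie_g (c : lc k fop) : prelie c = gprelie c.
Proof.
rewrite /prelie /gprelie /lc_bind /gbind; congr flatten; apply: eq_map => p.

Qed.

Lemma ti_ginst i : tideal (@R_PreLie k) (ginst k i).
Proof.
case: i => [a b c|a b c y|y a b c] /=.
- exact: (ti_rel _ (R_PreLie_lit k)).
- exact: (ti_nodel tt (Var y) (ti_rel _ (R_PreLie_lit k))).
- exact: (ti_noder tt (Var y) (ti_rel _ (R_PreLie_lit k))).
Qed.

Lemma ti_flatten_all (T : Type) (f : T -> lc k unit) (s : seq T) :
  (forall p, tideal (@R_PreLie k) (f p)) -> tideal (@R_PreLie k) (flatten (map f s)).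
Proof.
move=> H; elim: s => [|a s IH] /=; first exact: ti_nil.
exact: (ti_add (H a) IH).
Qed.

Lemma ti_gcert cs : tideal (@R_PreLie k) (gcert cs).
Proof.
apply: ti_flatten_all => q; apply: (ti_scale q.1); exact: ti_ginst.
Qed.

Fixpoint gcoefz (c : glc int unit) (t : term unit) : int :=
  if c is p :: c' then (if p.2 == t then p.1 else 0) + gcoefz c' t else 0.

Definition eqvb (c d : glc int unit) : bool :=
  all (fun m => gcoefz c m == gcoefz d m) [seq p.2 | p <- c ++ d].

Lemma coef_mapc (c : glc int unit) t : coef (mapc (intr : int -> k) c) t = (gcoefz c t)%:~R.
Proof.
elim: c => [|p c IH]; first by rewrite /coef big_nil.
rewrite /coef /= big_cons -/(coef _ _) IH /=.
by case: eqP => _; rewrite ?rmorphD ?add0r ?rmorph0.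
Qed.

Lemma gcoefz0 (c : glc int unit) t : t \notin [seq p.2 | p <- c] -> gcoefz c t = 0.
Proof.
elim: c => //= p c IH; rewrite inE negb_or => /andP[ne /IH ->].
by rewrite eq_sym (negbTE ne) addr0.
Qed.

Lemma eqvb_eqv (c d : glc int unit) : eqvb c d -> lc_eqv (mapc (intr : int -> k) c) (mapc (intr : int -> k) d).
Proof.
move=> /allP H t; rewrite !coef_mapc.
case: (boolP (t \in [seq p.2 | p <- c ++ d])) => [/H /eqP -> //|].
by rewrite map_cat mem_cat negb_or => /andP[/gcoefz0 -> /gcoefz0 ->].
Qed.

Lemma cert_ok (rZ dZ : glc int fop) (cs : seq (int * inst)) :
  eqvb (gcert cs) (gsub (gprelie rZ) (gprelie dZ)) ->
  tideal (@R_PreLie k) (lc_sub (prelie (mapc (intr : int -> k) rZ)) (prelie (mapc (intr : int -> k) dZ))).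
Proof.
move=> /eqvb_eqv e.
have t := ti_gcert (mapc (intr : int -> k) cs).
rewrite -mapc_cert in t.
apply: (ti_eqv (eqv_trans e _) t).
by rewrite mapc_sub !mapc_prelie !prelie_g.
Qed.

End Conv.

Definition fX (i : nat) : term fop := Var i.
Definition fC (a b : term fop) : term fop := Node OCirc a b.
Definition fB (a b : term fop) : term fop := Node OBr a b.
Definition uV (i : nat) : term unit := Var i.
Definition uD (a b : term unit) : term unit := Node tt a b.
Definition r_comm (R : pzRingType) : glc R fop :=
  [:: (1, (fC (fX 0) (fX 1)));
      (-1, (fC (fX 1) (fX 0)))].
Definition d_comm : glc int fop :=
  [:: ].
Definition cs_comm : seq (int * inst) :=
  [:: ].
Definition r_skew (R : pzRingType) : glc R fop :=
  [:: (1, (fB (fX 0) (fX 1)));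
      (1, (fB (fX 1) (fX 0)))].
Definition d_skew : glc int fop :=
  [:: ].
Definition cs_skew : seq (int * inst) :=
  [:: ].
Definition r_assoc (R : pzRingType) : glc R fop :=
  [:: (1, (fC (fC (fX 0) (fX 1)) (fX 2)));
      (-1, (fC (fX 0) (fC (fX 1) (fX 2))))].
Definition d_assoc : glc int fop :=
  [:: ((-1), (fB (fX 0) (fC (fX 1) (fX 2))));
      (1, (fC (fX 0) (fB (fX 1) (fX 2))));
      (1, (fB (fX 0) (fB (fX 1) (fX 2))));
      ((-1), (fB (fC (fX 0) (fX 1)) (fX 2)));
      (1, (fC (fB (fX 0) (fX 1)) (fX 2)));
      ((-1), (fB (fB (fX 0) (fX 1)) (fX 2)));
      (2, (fC (fB (fX 0) (fX 2)) (fX 1)))].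
Definition cs_assoc : seq (int * inst) :=
  [:: (2, ISub (uV 0) (uV 1) (uV 2));
      (2, ISub (uV 1) (uV 0) (uV 2));
      (2, ISub (uV 2) (uV 0) (uV 1))].
Definition r_jac (R : pzRingType) : glc R fop :=
  [:: (1, (fB (fB (fX 0) (fX 1)) (fX 2)));
      (1, (fB (fB (fX 1) (fX 2)) (fX 0)));
      (1, (fB (fB (fX 2) (fX 0)) (fX 1)))].
Definition d_jac : glc int fop :=
  [:: ].
Definition cs_jac : seq (int * inst) :=
  [:: (1, ISub (uV 0) (uV 1) (uV 2));
      ((-1), ISub (uV 1) (uV 0) (uV 2));
      (1, ISub (uV 2) (uV 0) (uV 1))].
Definition r_hm (R : pzRingType) : glc R fop :=
  [:: (1, (fB (fC (fX 0) (fX 1)) (fC (fX 2) (fX 3))));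
      (-1, (fC (fB (fC (fX 0) (fX 1)) (fX 2)) (fX 3)));
      (-1, (fC (fB (fC (fX 0) (fX 1)) (fX 3)) (fX 2)));
      (-1, (fC (fX 0) (fB (fX 1) (fC (fX 2) (fX 3)))));
      (-1, (fC (fX 1) (fB (fX 0) (fC (fX 2) (fX 3)))));
      (1, (fC (fC (fX 0) (fX 2)) (fB (fX 1) (fX 3))));
      (1, (fC (fC (fX 1) (fX 2)) (fB (fX 0) (fX 3))));
      (1, (fC (fC (fX 1) (fX 3)) (fB (fX 0) (fX 2))));
      (1, (fC (fC (fX 0) (fX 3)) (fB (fX 1) (fX 2))))].
Definition d_hm : glc int fop :=
  [:: (1, (fC (fX 0) (fB (fX 1) (fB (fX 2) (fX 3)))));
      ((-1), (fB (fX 0) (fB (fC (fX 1) (fX 2)) (fX 3))));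
      ((-2), (fC (fX 0) (fB (fB (fX 1) (fX 2)) (fX 3))));
      ((-1), (fB (fB (fX 0) (fX 1)) (fB (fX 2) (fX 3))));
      (1, (fB (fB (fX 0) (fC (fX 1) (fX 2))) (fX 3)));
      (2, (fC (fB (fX 0) (fB (fX 1) (fX 2))) (fX 3)));
      ((-2), (fB (fB (fX 0) (fB (fX 1) (fX 2))) (fX 3)));
      ((-1), (fC (fB (fB (fX 0) (fX 1)) (fX 2)) (fX 3)));
      (2, (fB (fB (fB (fX 0) (fX 1)) (fX 2)) (fX 3)));
      ((-1), (fB (fX 0) (fB (fC (fX 1) (fX 3)) (fX 2))));
      (1, (fB (fB (fX 0) (fC (fX 1) (fX 3))) (fX 2)));
      (2, (fC (fB (fX 0) (fB (fX 1) (fX 3))) (fX 2)));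
      ((-2), (fB (fB (fX 0) (fB (fX 1) (fX 3))) (fX 2)));
      ((-1), (fC (fB (fB (fX 0) (fX 1)) (fX 3)) (fX 2)));
      ((-1), (fB (fC (fX 0) (fX 2)) (fB (fX 1) (fX 3))));
      (1, (fC (fB (fX 0) (fB (fX 2) (fX 3))) (fX 1)));
      ((-2), (fC (fB (fB (fX 0) (fX 2)) (fX 3)) (fX 1)));
      ((-1), (fB (fC (fX 0) (fX 3)) (fB (fX 1) (fX 2))))].
Definition cs_hm : seq (int * inst) :=
  [:: ((-2), ISub (uD (uV 0) (uV 1)) (uV 2) (uV 3));
      ((-2), ISub (uD (uV 0) (uV 3)) (uV 1) (uV 2));
      (1, ISub (uD (uV 1) (uV 2)) (uV 0) (uV 3));
      ((-1), ISub (uD (uV 1) (uV 3)) (uV 0) (uV 2));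
      (1, ISub (uD (uV 2) (uV 1)) (uV 0) (uV 3));
      (2, ISub (uD (uV 3) (uV 0)) (uV 1) (uV 2));
      ((-1), ISub (uD (uV 3) (uV 1)) (uV 0) (uV 2));
      (2, ISub (uD (uV 3) (uV 2)) (uV 0) (uV 1));
      (2, ISub (uV 2) (uD (uV 0) (uV 1)) (uV 3));
      ((-2), ISub (uV 3) (uD (uV 0) (uV 1)) (uV 2));
      ((-2), ISub (uV 1) (uD (uV 0) (uV 3)) (uV 2));
      ((-2), ISub (uV 2) (uD (uV 0) (uV 3)) (uV 1));
      (4, ISub (uV 3) (uD (uV 1) (uV 0)) (uV 2));
      ((-1), ISub (uV 0) (uD (uV 1) (uV 2)) (uV 3));
      ((-3), ISub (uV 3) (uD (uV 1) (uV 2)) (uV 0));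
      ((-3), ISub (uV 0) (uD (uV 1) (uV 3)) (uV 2));
      ((-1), ISub (uV 2) (uD (uV 1) (uV 3)) (uV 0));
      ((-1), ISub (uV 0) (uD (uV 2) (uV 1)) (uV 3));
      (5, ISub (uV 3) (uD (uV 2) (uV 1)) (uV 0));
      (2, ISub (uV 1) (uD (uV 3) (uV 0)) (uV 2));
      (2, ISub (uV 2) (uD (uV 3) (uV 0)) (uV 1));
      (1, ISub (uV 0) (uD (uV 3) (uV 1)) (uV 2));
      (3, ISub (uV 2) (uD (uV 3) (uV 1)) (uV 0));
      ((-2), ISub (uV 0) (uD (uV 3) (uV 2)) (uV 1));
      ((-2), ISub (uV 1) (uD (uV 3) (uV 2)) (uV 0));
      (2, IL 1 2 3 0);
      (2, IR 0 1 2 3);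
      ((-2), IL 2 1 3 0);
      ((-2), IR 0 2 1 3);
      ((-2), IL 3 1 2 0);
      (2, IR 0 3 1 2);
      (2, IL 0 2 3 1);
      (2, IR 1 0 2 3);
      ((-2), IL 2 0 3 1);
      ((-2), IR 1 2 0 3);
      (2, IL 3 0 2 1);
      (2, IR 1 3 0 2);
      ((-2), IL 0 1 3 2);
      (2, IR 2 0 1 3);
      ((-2), IL 1 0 3 2);
      ((-2), IR 2 1 0 3);
      ((-2), IL 3 0 1 2);
      (2, IR 2 3 0 1)].
Lemma chk_comm : eqvb (gcert cs_comm) (gsub (gprelie (r_comm int)) (gprelie d_comm)).
Proof. by vm_compute. Qed.
Lemma chk_skew : eqvb (gcert cs_skew) (gsub (gprelie (r_skew int)) (gprelie d_skew)).
Proof. by vm_compute. Qed.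
Lemma chk_assoc : eqvb (gcert cs_assoc) (gsub (gprelie (r_assoc int)) (gprelie d_assoc)).
Proof. by vm_compute. Qed.
Lemma chk_jac : eqvb (gcert cs_jac) (gsub (gprelie (r_jac int)) (gprelie d_jac)).
Proof. by vm_compute. Qed.
Lemma chk_hm : eqvb (gcert cs_hm) (gsub (gprelie (r_hm int)) (gprelie d_hm)).
Proof. by vm_compute. Qed.

Section Final.
Variable k : fieldType.
Local Notation iK := (intr : int -> k).

Lemma nbr_tsubst (s : nat -> term fop) t :
  nbr (tsubst s t) = (nbr t + sumn [seq nbr (s v) | v <- vars t])%N.
Proof.
elim: t => [i|g a IHa b IHb] /=; first by rewrite addn0.
rewrite IHa IHb map_cat sumn_cat.
move: (nat_of_bool (g == OBr)) (nbr a) (nbr b) => n1 n2 n3; lia.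
Qed.

Lemma ml_sumn kr (t : term fop) (h : nat -> nat) : ml kr t ->
  sumn [seq h v | v <- vars t] = sumn [seq h v | v <- iota 0 kr].
Proof. by move=> mt; apply: perm_sumn; apply: perm_map. Qed.

Lemma lin_lsubst_sub h (S : nat -> lc k unit) A B :
  lin h (lsubst S (lc_sub A B)) = lin h (lsubst S A) - lin h (lsubst S B).
Proof.
by rewrite /lc_sub lsubst_cat lin_cat (lin_eqv _ (lsubst_scale _ _ _)) lin_scale mulN1r.
Qed.

Lemma rel_ok (r d : lc k fop) kr q :
  all (fun p => ml kr p.2 && (nbr p.2 == q)) r ->
  all (fun p => ml kr p.2 && (q < nbr p.2)%N) d ->
  tideal (@R_PreLie k) (lc_sub (prelie r) (prelie d)) ->
  forall s, Qp (lc_subst s r).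
Proof.
move=> Hr Hd Ht s p.
set N := (q + sumn [seq nbr (s v) | v <- iota 0 kr])%N.
have nr : forall z, z \in lc_subst s r -> nbr z.2 = N.
  move=> z /mapP[z0 /(allP Hr) /andP[m0 /eqP n0] ->] /=.
  by rewrite nbr_tsubst n0 (ml_sumn _ m0).
case: (eqVneq p N) => [->|ne].
  exists (lc_subst s d).
    rewrite /lc_subst all_map; apply/allP => z0 /(allP Hd) /andP[m0 n0] /=.
    rewrite /preim /= nbr_tsubst (ml_sumn _ m0) /N.
    move: n0; move: (nbr z0.2) (sumn _) => a b0; lia.
  have -> : part N (lc_subst s r) = lc_subst s r.
    by apply/all_filterP; apply/allP => z /nr ->.
  apply: (ti_eqv _ (ti_lsubst (fun i => prelie_t k (s i)) Ht)).
  apply: eqvP => h; rewrite lin_lsubst_sub !lin_sub.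
  by rewrite (lin_eqv _ (prelie_lsubst s r)) (lin_eqv _ (prelie_lsubst s d)).
exists [::] => //.
have -> : part p (lc_subst s r) = [::].
  rewrite /part (@eq_in_filter _ _ pred0) ?filter_pred0 // => z /nr /= ->.
  by apply/eqP => e; rewrite e eqxx in ne.
exact: ti_nil.
Qed.

Lemma all_mapc (P : pred (term fop)) (c : glc int fop) :
  all (fun p => P p.2) (mapc iK c) = all (fun p => P p.2) c.
Proof. by rewrite /mapc all_map. Qed.

Lemma mapc_r_comm : mapc iK (r_comm int) = r_comm k.
Proof. by rewrite /mapc /= rmorph1 rmorphN1. Qed.
Lemma mapc_r_skew : mapc iK (r_skew int) = r_skew k.
Proof. by rewrite /mapc /= rmorph1. Qed.
Lemma mapc_r_assoc : mapc iK (r_assoc int) = r_assoc k.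
Proof. by rewrite /mapc /= rmorph1 rmorphN1. Qed.
Lemma mapc_r_jac : mapc iK (r_jac int) = r_jac k.
Proof. by rewrite /mapc /= rmorph1. Qed.
Lemma mapc_r_hm : mapc iK (r_hm int) = r_hm k.
Proof. by rewrite /mapc /= rmorph1 rmorphN1. Qed.

Lemma Q_comm s : Qp (lc_subst s (r_comm k)).
Proof.
apply: (@rel_ok _ (mapc iK d_comm) 2 0); rewrite ?all_mapc //.
by rewrite -mapc_r_comm; apply: cert_ok chk_comm.
Qed.
Lemma Q_skew s : Qp (lc_subst s (r_skew k)).
Proof.
apply: (@rel_ok _ (mapc iK d_skew) 2 1); rewrite ?all_mapc //.
by rewrite -mapc_r_skew; apply: cert_ok chk_skew.
Qed.
Lemma Q_assoc s : Qp (lc_subst s (r_assoc k)).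
Proof.
apply: (@rel_ok _ (mapc iK d_assoc) 3 0); rewrite ?all_mapc //.
by rewrite -mapc_r_assoc; apply: cert_ok chk_assoc.
Qed.
Lemma Q_jac s : Qp (lc_subst s (r_jac k)).
Proof.
apply: (@rel_ok _ (mapc iK d_jac) 3 2); rewrite ?all_mapc //.
by rewrite -mapc_r_jac; apply: cert_ok chk_jac.
Qed.
Lemma Q_hm s : Qp (lc_subst s (r_hm k)).
Proof.
apply: (@rel_ok _ (mapc iK d_hm) 4 1); rewrite ?all_mapc //.
by rewrite -mapc_r_hm; apply: cert_ok chk_hm.
Qed.

Lemma Hrel (r : lc k fop) s : R_FMan r -> Qp (lc_subst s r).
Proof.
case=> [->|[->|[->|[->|->]]]].
- exact: Q_comm.
- exact: Q_skew.
- exact: Q_assoc.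
- exact: Q_jac.
- exact: Q_hm.
Qed.

End Final.

Unset Implicit Arguments.

Theorem lemma4 (k : fieldType) (char0 : [pchar k] =i pred0) :
  exists phi : nat -> lc k fop -> lc k fop,
    [/\ is_operad_morphism (@K_FMan k) (@K_grPreLie k) phi,
        surjective_morphism (@K_FMan k) (@K_grPreLie k) phi,
        opeq (@K_grPreLie k) 2 (phi 2%N (lc_mono (circ (x 0) (x 1))))
                               (lc_mono (circ (x 0) (x 1)))
      & opeq (@K_grPreLie k) 2 (phi 2%N (lc_mono (br (x 0) (x 1))))
                               (lc_mono (br (x 0) (x 1)))].
Proof.
exists (fun _ c => c); split.
- split.
  + by [].
  + by move=> n c d _ _; apply: K_FMan_grPreLie; apply: Hrel.
  + move=> n a c d mc md; apply: K_self.
    by rewrite /lc_ml /lc_add /lc_scale all_cat all_map; apply/andP; split.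
  + by move=> n s c mc; apply: K_self; apply: ml_act.
  + by move=> m n i c d im mc md; apply: K_self; apply: ml_pcomp.
  + by apply: K_self.
- by move=> n d md; exists d => //; apply: K_self.
- by apply: K_self.
- by apply: K_self.
Qed.
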